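(* Let $b\ge2$ be an integer, let $X\subseteq\mathbf{N}^*$ be nonempty, let $J=\{\lfloor\log_b x\rfloor: x\in X\}$, let $j_0=\min J$, and let $G$ denote the smallest $b$-dc-semigroup containing $X$. \begin{enumerate} \item Suppose $j_0>0$, and let $l_0$ be a positive integer with $\{j_0,j_0+1,\dots,j_0+l_0-1\}\subseteq J$. Put $d=\lceil j_0/l_0\rceil$ and $t=dj_0$. \begin{itemize} \item If $d=1$, then $G=I_b(j_0,+\infty)$. \item If $d>1$, write $J\cap\{0,1,\dots,t-1\}=\bigcup_{k=0}^{n}\{j_k,j_k+1,\dots,j_k+l_k-1\}$ with $n\in\mathbf{N}$, $j_k\in\mathbf{N}$, $l_k\in\mathbf{N}^*$ and $j_{k+1}>j_k+l_k$ for $0\le k<n$. Then $G$ is the union of $I_b(t,+\infty)$ with all the sets $I_b\bigl(\sum_{i=1}^e j_{k_i},\ \sum_{i=1}^e l_{k_i}\bigr)$, where $1\le e<d$ and $k_1,\dots,k_e\in\{0,\dots,n\}$ with $j_{k_1}\le\dots\le j_{k_e}$. \end{itemize} \item Suppose $j_0=0$ and $b=2$. If $X=\{1\}$ then $G=\{1\}$. Otherwise, $G=\{1\}\cup G'$, where $G'$ is the smallest $2$-dc-semigroup containing $X\setminus\{1\}$ (described by part (1), applied with $J$ replaced by $J\setminus\{0\}$). \item Suppose $j_0=0$ and $b>2$. Then $G=\mathbf{N}^*$. \end{enumerate}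
   Context: $\mathbf{N}=\{0,1,2,\dots\}$ and $\mathbf{N}^*=\mathbf{N}\setminus\{0\}$. For an integer $b\ge2$, a $b$-dc-semigroup is a subsemigroup $G$ of the multiplicative semigroup $(\mathbf{N}^*,\cdot)$ which is closed with respect to the number of base-$b$ digits: if $x\in G$ and $b^{n-1}\le x<b^n$ then $\{y\in\mathbf{N}: b^{n-1}\le y<b^n\}\subseteq G$. For $i\in\mathbf{N}$ and $j\in\mathbf{N}^*$, $I_b(i,j)=\{x\in\mathbf{N}: b^i\le x<b^{i+j}\}$ and $I_b(i,+\infty)=\{x\in\mathbf{N}: x\ge b^i\}$. Note $\lfloor\log_b x\rfloor$ is one less than the number of base-$b$ digits of $x$. *)

(* Defs.v *)
From mathcomp Require Import all_boot.
Set Implicit Arguments. Unset Strict Implicit. Unset Printing Implicit Defensive.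

Definition dc_semigroup (b : nat) (G : nat -> Prop) : Prop :=
  [/\ (forall x, G x -> 0 < x),
      (forall x y, G x -> G y -> G (x * y)) &
      (forall n x y, G x -> b ^ n <= x < b ^ n.+1 -> b ^ n <= y < b ^ n.+1 -> G y)].

Definition gen_dc (b : nat) (X : nat -> Prop) (x : nat) : Prop :=
  forall G, dc_semigroup b G -> (forall y, X y -> G y) -> G x.

Definition Ib (b i j x : nat) : Prop := b ^ i <= x < b ^ (i + j).
Definition Ib_inf (b i x : nat) : Prop := b ^ i <= x.

(* J = { floor(log_b x) : x in X }; trunc_log b x = floor(log_b x) for x >= 1 *)
Definition logset (b : nat) (X : nat -> Prop) (j : nat) : Prop :=
  exists x, X x /\ trunc_log b x = j.

Definition cdiv (m n : nat) : nat := (m + n.-1) %/ n.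

(* Main.v *)
Require Import Defs.
From mathcomp Require Import all_boot zify.

Section S.
Variables (b : nat) (X : nat -> Prop).
Hypothesis hb : 2 <= b.
Hypothesis hX : forall x, X x -> 0 < x.

Lemma tl_ge k x : 0 < x -> (b ^ k <= x) = (k <= trunc_log b x).
Proof.
move=> x0; apply/idP/idP => h; first exact: trunc_log_max.
apply: leq_trans (trunc_logP hb x0); by rewrite leq_exp2l.
Qed.

Lemma tl_lt k x : 0 < x -> (x < b ^ k) = (trunc_log b x < k).
Proof. by move=> x0; rewrite ltnNge tl_ge // -ltnNge. Qed.

Lemma expb_gt0 k : 0 < b ^ k.
Proof. by rewrite expn_gt0; lia. Qed.

Lemma gen_pos x : gen_dc b X x -> 0 < x.
Proof.
move=> hx; apply: (hx (fun z => 0 < z)); last exact: hX.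
split => //; first by move=> ? ? ? ?; rewrite muln_gt0; apply/andP.
move=> n x0 y _ _ /andP[h _]; exact: leq_trans (expb_gt0 n) h.
Qed.

Lemma gen_dcP : dc_semigroup b (gen_dc b X).
Proof.
split; first exact: gen_pos.
- move=> x y hx hy G hG hXG; case: (hG) => _ hm _; apply: hm; [exact: hx | exact: hy].
- move=> n x y hx h1 h2 G hG hXG; case: (hG) => _ _ hd; apply: hd h1 h2; exact: hx.
Qed.

Lemma gen_X x : X x -> gen_dc b X x.
Proof. by move=> hx G _ h; apply: h. Qed.

Definition D n := forall y, b ^ n <= y < b ^ n.+1 -> gen_dc b X y.

Lemma D_of x n : gen_dc b X x -> b ^ n <= x < b ^ n.+1 -> D n.
Proof. move=> hx h y hy; case: gen_dcP => _ _ hd; exact: hd hx h hy. Qed.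

Lemma D_gen x : gen_dc b X x -> D (trunc_log b x).
Proof.
move=> hx; have x0 := gen_pos _ hx.
apply: (D_of _ _ hx); rewrite tl_ge // tl_lt //; lia.
Qed.

Lemma gen_D x : 0 < x -> D (trunc_log b x) -> gen_dc b X x.
Proof. move=> x0 h; apply: h; rewrite tl_ge // tl_lt //; lia. Qed.

Lemma D_log m : logset b X m -> D m.
Proof. by case=> x [hx <-]; apply: D_gen; apply: gen_X. Qed.

Lemma D_add a c : D a -> D c -> D (a + c).
Proof.
move=> ha hc; have hm : gen_dc b X (b ^ a * b ^ c).
  case: gen_dcP => _ hm _; apply: hm; [apply: ha | apply: hc];
  rewrite leqnn /= ltn_exp2l //; lia.
apply: (D_of _ _ hm); rewrite -expnD leqnn /= ltn_exp2l //; lia.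
Qed.

Lemma D_add1 a c : D a -> D c -> (3 <= b \/ (1 <= a /\ 1 <= c)) -> D (a + c).+1.
Proof.
move=> ha hc hbc.
set P := b ^ a; set Q := b ^ c.
have P1 : 0 < P by exact: expb_gt0.
have Q1 : 0 < Q by exact: expb_gt0.
have hu : gen_dc b X (b * P - 1).
  apply: ha; rewrite -/P expnS -/P; nia.
have hv : gen_dc b X (b * Q - 1).
  apply: hc; rewrite -/Q expnS -/Q; nia.
have hm : gen_dc b X ((b * P - 1) * (b * Q - 1)).
  by case: gen_dcP => _ hm _; apply: hm.
apply: (D_of _ _ hm); rewrite !expnS expnD -/P -/Q.
case: hbc => [hb3|[a1 c1]].
- nia.
- have Pb : b <= P by rewrite /P -{1}(expn1 b) leq_exp2l.
  have Qb : b <= Q by rewrite /Q -{1}(expn1 b) leq_exp2l.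
  nia.
Qed.

Lemma D_int p q r s : 1 <= p -> 1 <= r -> 1 <= q -> 1 <= s ->
  (forall m, p <= m < p + q -> D m) -> (forall m, r <= m < r + s -> D m) ->
  forall m, p + r <= m < p + r + q + s -> D m.
Proof.
move=> p1 r1 q1 s1 hA hB m hm.
case: (leqP m (p + q + r + s - 2)) => hm2.
- have -> : m = minn (m - r) (p + q - 1) + (m - minn (m - r) (p + q - 1)) by lia.
  apply: D_add; [apply: hA | apply: hB]; lia.
- have -> : m = ((p + q - 1) + (r + s - 1)).+1 by lia.
  apply: D_add1; [apply: hA; lia | apply: hB; lia | right; lia].
Qed.

Lemma E_dc (E : nat -> Prop) :
  (forall i c, E i -> E c -> E (i + c) /\ E (i + c).+1) ->
  dc_semigroup b (fun x => 0 < x /\ E (trunc_log b x)).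
Proof.
move=> hE; split.
- by move=> x [].
- move=> x y [x0 hx] [y0 hy]; have xy0 : 0 < x * y by rewrite muln_gt0 x0.
  split => //.
  have h1 : trunc_log b x + trunc_log b y <= trunc_log b (x * y).
    rewrite -tl_ge // expnD; apply: leq_mul; rewrite tl_ge //.
  have h2 : trunc_log b (x * y) < (trunc_log b x + trunc_log b y).+2.
    rewrite -tl_lt //.
    have hx' : x < b ^ (trunc_log b x).+1 by rewrite tl_lt.
    have hy' : y < b ^ (trunc_log b y).+1 by rewrite tl_lt.
    rewrite !expnS in hx' hy' *; rewrite expnD; nia.
  have [e1 e2] := hE _ _ hx hy.
  by have [->|->] : trunc_log b (x * y) = trunc_log b x + trunc_log b y \/
     trunc_log b (x * y) = (trunc_log b x + trunc_log b y).+1 by lia.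
- move=> n x y [x0 hx] hxn hyn.
  have y0 : 0 < y by case/andP: hyn => h _; exact: leq_trans (expb_gt0 n) h.
  split => //; by rewrite (trunc_log_eq hb hyn) -(trunc_log_eq hb hxn).
Qed.

Lemma gen_E (E : nat -> Prop) :
  (forall i c, E i -> E c -> E (i + c) /\ E (i + c).+1) ->
  (forall m, logset b X m -> E m) ->
  forall x, gen_dc b X x -> 0 < x /\ E (trunc_log b x).
Proof.
move=> hE hJ x hx; apply: (hx (fun z => 0 < z /\ E (trunc_log b z))); first exact: E_dc.
move=> y hy; split; first exact: hX.
by apply: hJ; exists y.
Qed.

Lemma sum_pos n (f : nat -> nat) (s : seq nat) : (forall k, k <= n -> 1 <= f k) ->
  s != [::] -> all (fun k => k <= n) s -> 1 <= \sum_(k <- s) f k.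
Proof.
case: s => // k s hf _ /andP[hk _]; rewrite big_cons; have := hf k hk; lia.
Qed.

Lemma D_ks (n : nat) (j l : nat -> nat) : (forall k, k <= n -> 1 <= j k) ->
  (forall k, k <= n -> 1 <= l k) ->
  (forall k, k <= n -> forall m, j k <= m < j k + l k -> D m) ->
  forall ks, ks != [::] -> all (fun k => k <= n) ks -> forall m,
  \sum_(k <- ks) j k <= m < \sum_(k <- ks) j k + \sum_(k <- ks) l k -> D m.
Proof.
move=> hj hl hD; elim=> // k ks IH _ /andP[hk hall].
case: (eqVneq ks [::]) => [->|hne].
  by rewrite !big_cons !big_nil !addn0; apply: hD.
have sj := sum_pos _ _ _ hj hne hall; have sl := sum_pos _ _ _ hl hne hall.
move: sj sl (IH hne hall); rewrite !big_cons.
move: (\sum_(k <- ks) j k) (\sum_(k <- ks) l k) => R T sj sl hB m hm.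
have := hj k hk; have := hl k hk => l1 j1.
apply: (D_int _ _ _ _ j1 sj l1 sl (hD k hk) hB); lia.
Qed.

Section P1.
Variables (j0 l0 : nat).
Hypotheses (j0pos : 0 < j0) (l0pos : 0 < l0)
  (hJl : forall j, j0 <= j < j0 + l0 -> logset b X j).

Lemma D_mult e : 1 <= e -> forall m, e * j0 <= m < e * j0 + e * l0 -> D m.
Proof.
elim: e => // e IH _; case: (posnP e) => [->|e0].
  by move=> m hm; apply: D_log; apply: hJl; lia.
move=> m hm.
apply: (D_int (e * j0) (e * l0) j0 l0); try lia.
- exact: IH.
- by move=> m' hm'; apply: D_log; apply: hJl.
Qed.

Lemma D_big m : cdiv j0 l0 * j0 <= m -> D m.
Proof.
rewrite /cdiv => hm.
have h3 : (j0 + l0.-1) %/ l0 <= m %/ j0.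
  by have := leq_div2r j0 hm; rewrite mulnK.
have h6 : 0 < (j0 + l0.-1) %/ l0 by rewrite divn_gt0 //; lia.
apply: (D_mult (m %/ j0)); first lia.
have h1 := divn_eq m j0; have h2 := ltn_pmod m j0pos.
have h4 := divn_eq (j0 + l0.-1) l0; have h5 := ltn_pmod (j0 + l0.-1) l0pos.
nia.
Qed.
End P1.
End S.

Definition Ek (j0 d n : nat) (j l : nat -> nat) m := d * j0 <= m \/ exists ks : seq nat,
  [/\ 1 <= size ks < d, all (fun k => k <= n) ks, sorted (fun a c => j a <= j c) ks &
      \sum_(k <- ks) j k <= m < \sum_(k <- ks) j k + \sum_(k <- ks) l k].

Lemma sum_ge j0 n (j : nat -> nat) ks : (forall k, k <= n -> j0 <= j k) ->
  all (fun k => k <= n) ks -> size ks * j0 <= \sum_(k <- ks) j k.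
Proof.
move=> hj; elim: ks => [|k ks IH] /=; first by rewrite big_nil.
move=> /andP[hk ha]; rewrite big_cons mulSn; have := hj k hk; have := IH ha; lia.
Qed.

Lemma E_cl j0 d n j l : (forall k, k <= n -> j0 <= j k) ->
  forall i c, Ek j0 d n j l i -> Ek j0 d n j l c ->
  Ek j0 d n j l (i + c) /\ Ek j0 d n j l (i + c).+1.
Proof.
move=> hj i c [hi|[ks1 [s1 a1 _ h1]]].
  by move=> _; split; left; lia.
case=> [hc|[ks2 [s2 a2 _ h2]]].
  by split; left; lia.
set ks := sort (fun a c => j a <= j c) (ks1 ++ ks2).
have hp : perm_eq ks (ks1 ++ ks2) by rewrite perm_sort.
have hs : forall f : nat -> nat, \sum_(k <- ks) f k = \sum_(k <- ks1) f k + \sum_(k <- ks2) f k.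
  by move=> f; rewrite (perm_big _ hp) big_cat.
have hsz : size ks = size ks1 + size ks2 by rewrite size_sort size_cat.
have hall : all (fun k => k <= n) ks by rewrite all_sort all_cat a1 a2.
have hsort : sorted (fun a c => j a <= j c) ks.
  by apply: sort_sorted => a b; apply: leq_total.
case: (ltnP (size ks) d) => hd.
- split; right; exists ks; split => //; rewrite ?hs; lia.
- have g1 := sum_ge _ _ _ _ hj a1; have g2 := sum_ge _ _ _ _ hj a2.
  have : d * j0 <= size ks * j0 by rewrite leq_mul2r hd orbT.
  rewrite hsz => g3.
  split; left; nia.
Qed.

Theorem mainTheorem4 (b : nat) (X : nat -> Prop) (j0 : nat) :
  2 <= b ->
  (forall x, X x -> 0 < x) ->
  (exists x, X x) ->
  logset b X j0 -> (forall j, logset b X j -> j0 <= j) ->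
  (* part (1) *)
  (0 < j0 -> forall l0 : nat, 0 < l0 ->
     (forall j, j0 <= j < j0 + l0 -> logset b X j) ->
     (cdiv j0 l0 = 1 -> forall x, gen_dc b X x <-> Ib_inf b j0 x) /\
     (1 < cdiv j0 l0 ->
       forall (n : nat) (j l : nat -> nat),
         (forall k, k <= n -> 0 < l k) ->
         (forall k, k < n -> j k + l k < j k.+1) ->
         (forall m, (logset b X m /\ m < cdiv j0 l0 * j0) <->
                    exists k, k <= n /\ j k <= m < j k + l k) ->
         forall x, gen_dc b X x <->
           (Ib_inf b (cdiv j0 l0 * j0) x \/
            exists ks : seq nat,
              [/\ 1 <= size ks < cdiv j0 l0,
                  all (fun k => k <= n) ks,
                  sorted (fun a c => j a <= j c) ks &
                  Ib b (\sum_(k <- ks) j k) (\sum_(k <- ks) l k) x]))) /\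
  (* part (2) *)
  (j0 = 0 -> b = 2 ->
     ((forall x, X x <-> x = 1) -> forall x, gen_dc b X x <-> x = 1) /\
     (~ (forall x, X x <-> x = 1) ->
        forall x, gen_dc b X x <-> (x = 1 \/ gen_dc 2 (fun y => X y /\ y <> 1) x))) /\
  (* part (3) *)
  (j0 = 0 -> 2 < b -> forall x, gen_dc b X x <-> 0 < x).
Proof.
move=> hb hX hne hj0 hmin; split; [|split].
- move=> j0pos l0 l0pos hJl.
  have Dbig := @D_big b X hb hX j0 l0 j0pos l0pos hJl.
  split.
  + move=> hd x; split => hx.
    * have [x0 hE] := @gen_E b X hb hX (fun m => j0 <= m)
        (fun i c hi hc => conj (leq_trans hi (leq_addr c i)) (leq_trans hi (leq_trans (leq_addr c i) (leqnSn _)))) hmin x hx.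
      by rewrite /Ib_inf tl_ge.
    * have x0 : 0 < x := leq_trans (@expb_gt0 b hb j0) hx.
      apply: (@gen_D b X hb x x0); apply: Dbig; rewrite hd mul1n -tl_ge //.
  + move=> hd n j l hl hjl hiff x.
    have hjj : forall k, k <= n -> j0 <= j k.
      move=> k hk; apply: hmin; have [] := (proj2 (hiff (j k))) _ => //.
      by exists k; rewrite hk leqnn /= -[X in X < _]addn0 ltn_add2l hl.
    split => hx.
    * have hJ : forall m, logset b X m -> Ek j0 (cdiv j0 l0) n j l m.
        move=> m hm; case: (leqP (cdiv j0 l0 * j0) m) => hmt; first by left.
        have [k [hk hkm]] := proj1 (hiff m) (conj hm hmt).
        right; exists [:: k]; split => //=; first by rewrite hk.
        by rewrite !big_cons !big_nil !addn0.
      have [x0 hE] := @gen_E b X hb hX (Ek j0 (cdiv j0 l0) n j l) (E_cl _ _ _ _ _ hjj) hJ x hx.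
      case: hE => [h|[ks [h1 h2 h3 h4]]].
        by left; rewrite /Ib_inf tl_ge.
      by right; exists ks; split => //; rewrite /Ib tl_ge // tl_lt.
    * have x0 : 0 < x.
        case: hx => [h|[ks [_ _ _ /andP[h _]]]]; exact: leq_trans (@expb_gt0 b hb _) h.
      apply: (@gen_D b X hb x x0); case: hx => [h|[ks [h1 h2 h3 h4]]].
        by apply: Dbig; rewrite -tl_ge.
      have hj1 : forall k, k <= n -> 1 <= j k.
        by move=> k hk; apply: leq_trans j0pos (hjj k hk).
      have hD : forall k, k <= n -> forall m, j k <= m < j k + l k -> D b X m.
        move=> k hk m hm; apply: (@D_log b X hb hX).
        by have [] := proj2 (hiff m) (ex_intro _ k (conj hk hm)).
      apply: (@D_ks b X hb hX _ _ _ hj1 hl hD ks) => //.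
        by case: (ks) h1.
      by move: h4; rewrite /Ib tl_ge // tl_lt.
- move=> j00 b2; subst j0 b.
  have X1 : X 1.
    case: hj0 => x [hx hx0]; have x0 := hX x hx.
    have h2 : x < 2 ^ 1 by rewrite tl_lt // hx0.
    rewrite expn1 in h2.
    by have <- : x = 1 by lia.
  have exp01 : forall n, 2 ^ n <= 1 -> n = 0.
    by case=> // n; rewrite expnS; have := @expb_gt0 2 (leqnn 2) n; lia.
  split.
  + move=> hX1 x; split; last by move=> ->; apply: gen_X.
    move=> hx; apply: (hx (fun z => z = 1)); last by move=> y /hX1.
    split; [by move=> ? -> | by move=> ? ? -> -> |].
    move=> n x' y -> /andP[h1 _] /andP[h2 h3].
    move: (exp01 n h1) h2 h3 => -> /=; lia.
  + move=> _ x; split.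
    * set X' := fun y => X y /\ y <> 1.
      have hX' : forall y, X' y -> 0 < y by move=> y [/hX].
      case: (@gen_dcP 2 X' (leqnn 2) hX') => _ hm hdg.
      move=> hx; apply: (hx (fun z => z = 1 \/ gen_dc 2 X' z)); last first.
        by move=> y hy; case: (eqVneq y 1) => [->|hy1]; [left | right; apply: gen_X; split => //; exact/eqP].
      split.
      - by move=> z [->|/(@gen_pos 2 X' (leqnn 2) hX' z)].
      - move=> u v [->|hu] [->|hv]; rewrite ?mul1n ?muln1; by [left | right | right; apply: hm].
      - move=> n u v [->|hu] hun hvn.
          move: hun hvn => /andP[h1 _]; move: (exp01 n h1) => -> /andP[h2 h3]; left; lia.
        by right; apply: hdg hu hun hvn.
    * case=> [->|h]; first exact: gen_X.
      apply: h; first exact: gen_dcP.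
      by move=> y [hy _]; apply: gen_X.
- move=> j00 b3 x; split; first exact: gen_pos.
  move=> x0; apply: (@gen_D b X hb x x0).
  have D0 : D b X 0 by apply: (@D_log b X hb hX); rewrite -j00.
  elim: (trunc_log b x) => // n IH.
  by have := @D_add1 b X hb hX _ _ IH D0 (or_introl b3); rewrite addn0.
Qed.
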